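(* With the notation below, let $f,g\in\mathcal K(C_p)$ be real-valued. (i) $\|f\vee g\|_p\leq\max\{\|f\|_p,\|g\|_p\}$. (ii) $\|f+g\|_p\leq\max\{\|f\|_p,\|g\|_p\}$. (iii) $\|p^af\|_p=p^{-a}\|f\|_p$ for $a\in\mathbb{Z}$. (iv) $\|f\|_p\leq1$ if and only if the restriction of $f$ to $[1,p]$ has integral slopes. (v) For $D\in\mathrm{Div}(C_p)$, the sets $H^0(D)^\rho=\{f\in H^0(D)\mid\|f\|_p\leq\rho\}$ ($\rho>0$) form an increasing filtration of $H^0(D)$ by $\mathbb{R}_{\max}$-submodules.
   Context: Let $p$ be a prime, $H_p=\mathbb{Z}[1/p]$, $|\cdot|_p$ the $p$-adic absolute value on $H_p$ normalized by $|p|_p=1/p$. $C_p$ is the set of subgroups $H=\lambda H_p\subset\mathbb{R}$, $\lambda>0$. $\mathcal K(C_p)$: continuous piecewise affine $f:(0,\infty)\to\mathbb{R}$ with slopes in $H_p$ and $f(p\lambda)=f(\lambda)$, plus the constant $-\infty$; it is a semifield for $\vee=\max$ and $+$, and an $\mathbb{R}_{\max}$-module ($\mathbb{R}_{\max}=\mathbb{R}\cup\{-\infty\}$ with operations max and $+$) via $\vee$ and addition of constants. For real-valued $f$, $\|f\|_p=\max\{|h|_p/\lambda\}$ over $\lambda\in(0,\infty)$ and $h$ ranging over the left and right slopes of $f$ at $\lambda$. Divisors: maps $D$ with $D(H)\in H$ for $H\in C_p$, zero for all but finitely many $H$, ordered pointwise; principal divisor $(f)(H)=h_+-h_-$ for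 $H=\lambda H_p$, with $h_\pm=\lim_{\epsilon\to0\pm}(f((1+\epsilon)\lambda)-f(\lambda))/\epsilon$. $H^0(D)=\{f\in\mathcal K(C_p)\text{ real-valued}\mid D+(f)\geq0\}\cup\{-\infty\}$, the element $-\infty$ being included in every $H^0(D)^\rho$. *)

(* Defs.v *)
From HB Require Import structures.
From mathcomp Require Import all_boot all_order all_algebra.
From mathcomp Require Import all_classical all_reals all_analysis.
Set Implicit Arguments. Unset Strict Implicit. Unset Printing Implicit Defensive.
Import Order.TTheory GRing.Theory Num.Theory.
Import numFieldNormedType.Exports.
Local Open Scope classical_set_scope.
Local Open Scope ring_scope.

Section Defs.
Variable R : realType.
Variable p : nat.

Definition inHp (h : R) : Prop :=
  exists (a : int) (k : nat), h = a%:~R / (p%:R) ^+ k.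

Definition padic_abs (h : R) : R :=
  if h == 0 then 0 else
  sup [set (p%:R : R) ^ (- n) | n in
        [set n : int | exists a : int, ~~ (p%:Z %| a)%Z /\ h = a%:~R * (p%:R) ^ n]].

Definition lamHp (lam : R) : set R := [set lam * h | h in [set h | inHp h]].

Definition Cp : set (set R) := [set H | exists lam : R, 0 < lam /\ H = lamHp lam].

Definition inK (f : R -> R) : Prop :=
  (forall x : R, 0 < x -> {for x, continuous f}) /\
  (forall a b : R, 0 < a -> a <= b ->
     exists (n : nat) (x : nat -> R),
       x 0%N = a /\ x n = b /\
       (forall i, (i < n)%N -> x i < x i.+1) /\
       (forall i, (i < n)%N -> exists h c : R, inHp h /\
          forall t, x i <= t <= x i.+1 -> f t = h * t + c)) /\
  (forall lam : R, 0 < lam -> f (p%:R * lam) = f lam).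

Definition rslope (f : R -> R) (lam : R) : R :=
  lim ((fun t : R => (f (lam + t) - f lam) / t) @ 0^'+).
Definition lslope (f : R -> R) (lam : R) : R :=
  lim ((fun t : R => (f (lam + t) - f lam) / t) @ 0^'-).

Definition normp (f : R -> R) : R :=
  sup [set r : R | exists lam h : R, 0 < lam /\
        (h = rslope f lam \/ h = lslope f lam) /\ r = padic_abs h / lam].

Definition hplus (f : R -> R) (lam : R) : R :=
  lim ((fun e : R => (f ((1 + e) * lam) - f lam) / e) @ 0^'+).
Definition hminus (f : R -> R) (lam : R) : R :=
  lim ((fun e : R => (f ((1 + e) * lam) - f lam) / e) @ 0^'-).
(* (f)(lam H_p) = h_+ - h_- (computed at any representative lam > 0) *)
Definition pdiv (f : R -> R) (lam : R) : R := hplus f lam - hminus f lam.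

(* divisors: D : C_p -> R, D(H) in H, finitely supported
   (represented as maps on set R; values outside C_p are irrelevant) *)
Definition isDiv (D : set R -> R) : Prop :=
  (forall lam : R, 0 < lam -> lamHp lam (D (lamHp lam))) /\
  finite_set [set H | Cp H /\ D H != 0].

(* elements of K(C_p): None is the constant -oo, Some f a real-valued f *)
Definition Kelt := option (R -> R).

(* R_max = R u {-oo}, None = -oo *)
Definition Rmax := option R.

Definition Kjoin (x y : Kelt) : Kelt :=
  match x, y with
  | None, _ => y
  | _, None => x
  | Some f, Some g => Some (fun t => Num.max (f t) (g t))
  end.

Definition Kact (c : Rmax) (x : Kelt) : Kelt :=
  match c, x with
  | Some r, Some f => Some (fun t => r + f t)
  | _, _ => None
  end.

Definition Rmax_submodule (S : set Kelt) : Prop :=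
  S None /\ (forall x y, S x -> S y -> S (Kjoin x y)) /\
  (forall c x, S x -> S (Kact c x)).

Definition H0 (D : set R -> R) : set Kelt := fun x =>
  match x with
  | None => True
  | Some f => inK f /\ forall lam : R, 0 < lam -> 0 <= D (lamHp lam) + pdiv f lam
  end.

Definition H0rho (D : set R -> R) (rho : R) : set Kelt := fun x =>
  match x with
  | None => True
  | Some f => H0 D (Some f) /\ normp f <= rho
  end.

End Defs.

(* Main.v *)
Require Import Defs.
From HB Require Import structures.
From mathcomp Require Import all_boot all_order all_algebra.
From mathcomp Require Import all_classical all_reals all_analysis.
From mathcomp Require Import ring lra zify.
Import Order.TTheory GRing.Theory Num.Theory.
Import numFieldNormedType.Exports.
Local Open Scope classical_set_scope.
Local Open Scope ring_scope.
Set Implicit Arguments. Unset Strict Implicit. Unset Printing Implicit Defensive.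
Section P1.
Variable R : realType.
Variable p : nat.
Hypothesis hp : prime p.
Let P : R := p%:R.
Lemma p_gt1 : (1 < p)%N. Proof. exact: prime_gt1. Qed.
Lemma P_gt1 : 1 < P. Proof. by rewrite /P ltr1n p_gt1. Qed.
Lemma P_gt0 : 0 < P. Proof. exact: lt_trans ltr01 P_gt1. Qed.
Lemma P_neq0 : P != 0. Proof. by rewrite gt_eqF // P_gt0. Qed.

Lemma int_factor (a : int) : a != 0 ->
  exists (c : int) (v : nat), ~~ (p%:Z %| c)%Z /\ a = c * (p%:Z) ^+ v.
Proof.
move: {2}(`|a|%N).+1 (ltnSn `|a|%N) => n; elim: n a => [//|n IH] a an ha.
have [pa|npa] := boolP (p%:Z %| a)%Z; last by exists a, 0%N; rewrite expr0 mulr1.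
have aE := divzK pa; set q := (a %/ p%:Z)%Z in aE.
have q0 : q != 0.
  by apply/eqP => q0; move: ha; rewrite -aE q0 mul0r eqxx.
have qa : (`|q| < `|a|)%N.
  rewrite -aE abszM /=; apply: ltn_Pmulr; first exact: p_gt1.
  by rewrite absz_gt0.
have [c [v [hc qE]]] := IH q (leq_trans qa (ltnSE an)) q0.
by exists c, v.+1; split=> //; rewrite -aE qE exprS -mulrA [_ * p%:Z]mulrC.
Qed.

Lemma Hp_repr (h : R) : h != 0 -> inHp p h ->
  exists (a : int) (n : int), ~~ (p%:Z %| a)%Z /\ h = a%:~R * P ^ n.
Proof.
move=> h0 [a [k hE]].
have a0 : a != 0 by apply/eqP => a0; move: h0; rewrite hE a0 mul0r eqxx.
have [c [v [hc aE]]] := int_factor a0.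
exists c, (v%:Z - k%:Z); split=> //.
rewrite hE aE rmorphM /= rmorphXn /= expfzDr ?P_neq0 //.
rewrite -exprnN -mulrA; congr (_ * (_ * _)).
Qed.

Lemma exprP_pos (k : nat) : P ^+ k = ((p%:Z) ^+ k)%:~R.
Proof. by rewrite rmorphXn /= /P -pmulrn. Qed.
Lemma exprP_posz (k : nat) : P ^ (k%:Z) = ((p%:Z) ^+ k)%:~R.
Proof. exact: exprP_pos. Qed.

Lemma repr_uniq (a b : int) (n m : int) : ~~ (p%:Z %| a)%Z -> ~~ (p%:Z %| b)%Z ->
  a%:~R * P ^ n = b%:~R * P ^ m -> n = m.
Proof.
wlog: a b n m / n <= m.
  move=> W ha hb E; have [nm|mn] := leP n m; first exact: (W a b n m nm ha hb E).
  by apply/esym; apply: (W b a m n (ltW mn) hb ha (esym E)).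
move=> nm ha hb E; move: nm; rewrite le_eqVlt => /orP [/eqP //|lt]; exfalso.
have [k kE] : exists k : nat, m - n = k.+1%:Z.
  have mn0 : 0 < m - n by rewrite subr_gt0.
  exists (`|m - n|%N).-1; rewrite prednK; first by rewrite gtz0_abs.
  by rewrite absz_gt0 gt_eqF.
have mE : m = n + k.+1%:Z by rewrite -kE addrC subrK.
move: E; rewrite mE expfzDr ?P_neq0 // mulrA [b%:~R * _]mulrC -mulrA.
rewrite [a%:~R * _]mulrC => /mulfI => /(_ (expfz_neq0 _ P_neq0)).
rewrite exprP_posz -rmorphM /= => /intr_inj aE.
by move: ha; rewrite aE exprS mulrCA dvdz_mulr.
Qed.

Lemma padic_abs0 : padic_abs p (0 : R) = 0.
Proof. by rewrite /padic_abs eqxx. Qed.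

Lemma padic_absE (a n : int) : ~~ (p%:Z %| a)%Z ->
  padic_abs p (a%:~R * P ^ n) = P ^ (- n).
Proof.
move=> ha; rewrite /padic_abs.
have a0 : a != 0 by apply/eqP => a0; move: ha; rewrite a0 dvdz0.
rewrite mulf_eq0 intr_eq0 (negbTE a0) expfz_eq0 (negbTE P_neq0) andbF /=.
rewrite -[X in sup X](_ : [set P ^ (- n)] = _) ?sup1 //.
apply/seteqP; split => x.
  by move=> ->; exists n => //; exists a.
by move=> [n0 [b [hb E]] <-]; rewrite (repr_uniq hb ha (esym E)).
Qed.

Lemma padic_abs_ge0 (h : R) : inHp p h -> 0 <= padic_abs p h.
Proof.
move=> hh; have [->|h0] := eqVneq h 0; first by rewrite padic_abs0.
have [a [n [ha ->]]] := Hp_repr h0 hh.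
by rewrite padic_absE // exprz_ge0 // ltW // P_gt0.
Qed.

Lemma padic_absMP (k : int) (h : R) : inHp p h ->
  padic_abs p (P ^ k * h) = P ^ (- k) * padic_abs p h.
Proof.
move=> hh; have [->|h0] := eqVneq h 0; first by rewrite mulr0 padic_abs0 mulr0.
have [a [n [ha ->]]] := Hp_repr h0 hh.
rewrite mulrCA -expfzDr ?P_neq0 // !padic_absE // -expfzDr ?P_neq0 //.
by rewrite opprD.
Qed.

Lemma ultra_aux (a b n m : int) : ~~ (p%:Z %| a)%Z -> ~~ (p%:Z %| b)%Z -> n <= m ->
  a%:~R * P ^ n + b%:~R * P ^ m != 0 ->
  padic_abs p (a%:~R * P ^ n + b%:~R * P ^ m) <= P ^ (- n).
Proof.
move=> ha hb nm s0.
have [k kE] : exists k : nat, m - n = k%:Z.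
  by exists `|m - n|%N; rewrite gez0_abs // subr_ge0.
have mE : m = n + k%:Z by rewrite -kE addrC subrK.
have sE : a%:~R * P ^ n + b%:~R * P ^ m = (a + b * (p%:Z) ^+ k)%:~R * P ^ n.
  rewrite mE expfzDr ?P_neq0 // rmorphD rmorphM /= -exprP_pos.
  by rewrite mulrDl -!mulrA [P ^+ k * _]mulrC.
move: s0; rewrite sE mulf_eq0 negb_or => /andP [c0 _].
rewrite intr_eq0 in c0.
have [c [v [hc cE]]] := int_factor c0.
rewrite cE rmorphM /= -exprP_posz -mulrA -expfzDr ?P_neq0 // padic_absE //.
by rewrite ler_eXz2l ?P_gt1 // lerN2 -subr_ge0 addrK.
Qed.

Lemma padic_ultra (h1 h2 : R) : inHp p h1 -> inHp p h2 ->
  padic_abs p (h1 + h2) <= Num.max (padic_abs p h1) (padic_abs p h2).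
Proof.
move=> H1 H2.
have [->|h10] := eqVneq h1 0; first by rewrite add0r le_max lexx orbT.
have [->|h20] := eqVneq h2 0; first by rewrite addr0 le_max lexx.
have [->|s0] := eqVneq (h1 + h2) 0.
  by rewrite padic_abs0 le_max padic_abs_ge0.
have [a [n [ha E1]]] := Hp_repr h10 H1.
have [b [m [hb E2]]] := Hp_repr h20 H2.
rewrite E1 E2 !padic_absE //; rewrite E1 E2 in s0.
have [nm|mn] := leP n m.
  by rewrite le_max ultra_aux.
by rewrite addrC le_max ultra_aux ?orbT // ?ltW // addrC.
Qed.

Lemma padic_abs_int (z : int) : padic_abs p (z%:~R : R) <= 1.
Proof.
have [->|z0] := eqVneq z 0; first by rewrite padic_abs0 ler01.
have [c [v [hc ->]]] := int_factor z0.
rewrite rmorphM /= -exprP_posz padic_absE //.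
by rewrite -[1](expr0z P) ler_eXz2l ?P_gt1 // oppr_le0.
Qed.

Lemma padic_abs_ltP (h : R) : inHp p h -> padic_abs p h < P ->
  exists z : int, h = z%:~R.
Proof.
move=> hh; have [->|h0] := eqVneq h 0; first by exists 0.
have [a [n [ha ->]]] := Hp_repr h0 hh.
rewrite padic_absE // -[X in _ < X](expr1z P) ltr_eXz2l ?P_gt1 // => lt.
have n0 : 0 <= n by move: lt; lia.
exists (a * (p%:Z) ^+ `|n|%N); rewrite rmorphM /= -exprP_posz.
by rewrite gez0_abs.
Qed.
End P1.

Section P2.
Variable R : realType.
Variable p : nat.
Hypothesis hp : prime p.
Local Notation P := (p%:R : R).

Definition rpiece (f : R -> R) (lam h : R) := exists d c : R, 0 < d /\
  forall t, lam <= t <= lam + d -> f t = h * t + c.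
Definition lpiece (f : R -> R) (lam h : R) := exists d c : R, 0 < d /\
  forall t, lam - d <= t <= lam -> f t = h * t + c.

Lemma rpiece_rslope f lam h : rpiece f lam h -> rslope f lam = h.
Proof.
move=> [d [c [d0 fE]]]; rewrite /rslope; apply: norm_lim_near_cst.
near=> t.
have t0 : 0 < t by near: t; exact: nbhs_right_gt.
have td : t < d by near: t; exact: nbhs_right_lt.
rewrite !fE; first (field; exact: lt0r_neq0).
  by rewrite lexx lerDl ltW.
by rewrite lerDl ltW // lerD2l ltW.
Unshelve. all: by end_near.
Qed.

Lemma lpiece_lslope f lam h : lpiece f lam h -> lslope f lam = h.
Proof.
move=> [d [c [d0 fE]]]; rewrite /lslope; apply: norm_lim_near_cst.
near=> t.
have t0 : t < 0 by near: t; exact: nbhs_left_lt.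
have td : - d < t by near: t; apply: nbhs_left_gt; rewrite oppr_lt0.
rewrite !fE; first (field; exact: ltr0_neq0).
  by apply/andP; split; lra.
by apply/andP; split; lra.
Unshelve. all: by end_near.
Qed.

Lemma rpiece_hplus f lam h : 0 < lam -> rpiece f lam h -> hplus f lam = h * lam.
Proof.
move=> l0 [d [c [d0 fE]]]; rewrite /hplus; apply: norm_lim_near_cst.
near=> t.
have t0 : 0 < t by near: t; exact: nbhs_right_gt.
have td : t < d / lam by near: t; apply: nbhs_right_lt; exact: divr_gt0.
have tl : t * lam < d by rewrite -ltr_pdivlMr.
rewrite !fE; first (field; exact: lt0r_neq0).
  by apply/andP; split; lra.
by apply/andP; split; nra.
Unshelve. all: by end_near.
Qed.

Lemma lpiece_hminus f lam h : 0 < lam -> lpiece f lam h -> hminus f lam = h * lam.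
Proof.
move=> l0 [d [c [d0 fE]]]; rewrite /hminus; apply: norm_lim_near_cst.
near=> t.
have t0 : t < 0 by near: t; exact: nbhs_left_lt.
have td : - (d / lam) < t.
  by near: t; apply: nbhs_left_gt; rewrite oppr_lt0 divr_gt0.
have tl : - d < t * lam by rewrite -ltr_pdivrMr // mulNr.
rewrite !fE; first (field; exact: ltr0_neq0).
  by apply/andP; split; lra.
by apply/andP; split; nra.
Unshelve. all: by end_near.
Qed.

Definition PA (f : R -> R) (a b : R) := exists (n : nat) (x : nat -> R),
  x 0%N = a /\ x n = b /\ (forall i, (i < n)%N -> x i < x i.+1) /\
  (forall i, (i < n)%N -> exists h c : R, inHp p h /\
     forall t, x i <= t <= x i.+1 -> f t = h * t + c).

Lemma inK_PA f a b : inK p f -> 0 < a -> a <= b -> PA f a b.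
Proof. by move=> [_ [H _]]; exact: H. Qed.

Lemma inK_rpiece f lam : inK p f -> 0 < lam -> exists h, inHp p h /\ rpiece f lam h.
Proof.
move=> fK l0; have l1 : lam <= lam + 1 by lra.
have [n [x [x0 [xn [xinc xp]]]]] := inK_PA fK l0 l1.
case: n xn xinc xp => [|n] xn xinc xp; first by move: xn; rewrite x0 => /eqP; lra.
have [h [c [hh fE]]] := xp 0%N isT.
exists h; split => //; exists (x 1%N - lam), c; split.
  by rewrite subr_gt0 -x0 xinc.
by move=> t /andP [t1 t2]; apply: fE; rewrite x0 t1 /=; lra.
Qed.

Lemma inK_lpiece f lam : inK p f -> 0 < lam -> exists h, inHp p h /\ lpiece f lam h.
Proof.
move=> fK l0.
have h2 : 0 < lam / 2 by lra.
have h3 : lam / 2 <= lam by lra.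
have [n [x [x0 [xn [xinc xp]]]]] := inK_PA fK h2 h3.
case: n xn xinc xp => [|n] xn xinc xp; first by move: xn; rewrite x0 => /eqP; lra.
have [h [c [hh fE]]] := xp n (ltnSn n).
exists h; split => //; exists (lam - x n), c; split.
  by rewrite subr_gt0 -xn xinc.
by move=> t /andP [t1 t2]; apply: fE; rewrite xn t2 andbT; lra.
Qed.

Lemma Pgt0 : 0 < P. Proof. exact: (P_gt0 R hp). Qed.
Lemma Pgt1 : 1 < P. Proof. exact: (P_gt1 R hp). Qed.
Lemma Pneq0 : P != 0. Proof. exact: (P_neq0 R hp). Qed.

Lemma inK_perz f (k : int) t : inK p f -> 0 < t -> f (P ^ k * t) = f t.
Proof.
move=> [_ [_ fper]] t0.
have nat_case : forall n : nat, forall s, 0 < s -> f (P ^+ n * s) = f s.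
  elim=> [|n IH] s s0; first by rewrite expr0 mul1r.
  by rewrite exprS -mulrA fper ?IH // mulr_gt0 // exprn_gt0 // Pgt0.
case: k => n; first exact: nat_case.
rewrite NegzE -exprnN.
have s0 : 0 < (P ^+ n.+1)^-1 * t by rewrite mulr_gt0 // invr_gt0 exprn_gt0 // Pgt0.
by have := nat_case n.+1 _ s0; rewrite mulVKf ?expf_neq0 ?Pneq0 // => ->.
Qed.

Lemma rpiece_scale f q mu h : 0 < q -> (forall s, 0 < s -> f (q * s) = f s) ->
  0 < mu -> rpiece f mu h -> rpiece f (q * mu) (q^-1 * h).
Proof.
move=> q0 fq m0 [d [c [d0 fE]]]; exists (q * d), c; split; first exact: mulr_gt0.
move=> t /andP [t1 t2].
have tE : t = q * (t / q) by field; exact: lt0r_neq0.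
have t0 : 0 < t by apply: lt_le_trans t1; exact: mulr_gt0.
rewrite tE fq ?divr_gt0 // fE; first by rewrite -tE; field; exact: lt0r_neq0.
by rewrite ler_pdivlMr // ler_pdivrMr //; apply/andP; split; nra.
Qed.

Lemma lpiece_scale f q mu h : 0 < q -> (forall s, 0 < s -> f (q * s) = f s) ->
  0 < mu -> lpiece f mu h -> lpiece f (q * mu) (q^-1 * h).
Proof.
move=> q0 fq m0 [d [c [d0 fE]]].
exists (q * Num.min d (mu / 2)), c; split.
  by rewrite mulr_gt0 // lt_min d0 divr_gt0.
move=> t /andP [t1 t2].
have mq : 0 < q * mu by exact: mulr_gt0.
have t0 : 0 < t.
  apply: lt_le_trans t1; rewrite subr_gt0 ltr_pM2l // gt_min; apply/orP; right; lra.
have tE : t = q * (t / q) by field; exact: lt0r_neq0.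
rewrite tE fq ?divr_gt0 // fE; first by rewrite -tE; field; exact: lt0r_neq0.
have dm : Num.min d (mu / 2) <= d by rewrite ge_min lexx.
rewrite ler_pdivlMr // ler_pdivrMr //; apply/andP; split; nra.
Qed.

Lemma lnXz (x : R) (k : int) : 0 < x -> ln (x ^ k) = k%:~R * ln x.
Proof.
move=> x0; case: k => n; first by rewrite lnXn // -mulr_natl.
rewrite NegzE -exprnN lnV ?posrE ?exprn_gt0 // lnXn //.
by rewrite rmorphN /= mulNr -mulr_natl.
Qed.

Lemma decompR lam : 0 < lam -> exists (k : int) (mu : R), 1 <= mu < P /\ lam = P ^ k * mu.
Proof.
move=> l0; have lnP : 0 < ln P by rewrite ln_gt0 // Pgt1.
set k := Num.floor (ln lam / ln P).
have /andP [k1 k2] := mem_rg1_floor (ln lam / ln P).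
exists k, (P ^ (- k) * lam); split; last first.
  by rewrite mulrA -expfzDr ?Pneq0 // subrr expr0z mul1r.
have m0 : 0 < P ^ (- k) * lam by rewrite mulr_gt0 // exprz_gt0 // Pgt0.
have lnm : ln (P ^ (- k) * lam) = ln lam - k%:~R * ln P.
  rewrite lnM ?posrE ?exprz_gt0 ?Pgt0 // lnXz ?Pgt0 //.
  by rewrite rmorphN /= mulNr addrC.
rewrite -(ler_ln (x := 1)) ?posrE // ?ltr01 // -(ltr_ln (y := P)) ?posrE ?Pgt0 //.
rewrite ln1 lnm; apply/andP; split.
  by rewrite subr_ge0 -ler_pdivlMr.
by move: k2; rewrite ltr_pdivrMr // mulrDl mul1r -/k => k2; lra.
Qed.

Lemma decompL lam : 0 < lam -> exists (k : int) (mu : R), 1 < mu <= P /\ lam = P ^ k * mu.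
Proof.
move=> /decompR [k [mu [/andP [m1 m2] lE]]].
move: m1; rewrite le_eqVlt => /orP [/eqP m1|m1].
  exists (k - 1), P; split; first by rewrite lexx Pgt1.
  by rewrite lE -m1 mulr1 -[X in _ = _ * X]expr1z -expfzDr ?Pneq0 // subrK.
by exists k, mu; rewrite m1 ltW.
Qed.

Lemma fin_bound (Q : nat -> R -> Prop) (g : R -> R) n :
  (forall i, (i < n)%N -> exists h, Q i h) ->
  exists M, 0 <= M /\ forall i, (i < n)%N -> exists h, Q i h /\ g h <= M.
Proof.
elim: n => [|n IH] H; first by exists 0; split.
have [M [M0 HM]] : exists M, 0 <= M /\ forall i, (i < n)%N -> exists h, Q i h /\ g h <= M.
  by apply: IH => i lt; apply: H; exact: ltnW.
have [hn Qn] := H n (ltnSn n).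
exists (Num.max M (g hn)); split; first by rewrite le_max M0.
move=> i; rewrite ltnS leq_eqVlt => /orP [/eqP ->|lt].
  by exists hn; split => //; rewrite le_max lexx orbT.
have [h [Qh gh]] := HM i lt; exists h; split => //; rewrite le_max gh //.
Qed.

Lemma find_r (x : nat -> R) n mu : (forall i, (i < n)%N -> x i < x i.+1) ->
  x 0%N <= mu < x n -> exists i, (i < n)%N /\ x i <= mu < x i.+1.
Proof.
elim: n => [|n IH] xinc /andP [m1 m2]; first by move: m2; rewrite ltNge m1.
have [mn|mn] := ltP mu (x n).
  have [i [i1 i2]] := IH (fun i lt => xinc i (ltnW lt)) (introT andP (conj m1 mn)).
  by exists i; split => //; exact: ltnW.
by exists n; split => //; rewrite mn.
Qed.

Lemma find_l (x : nat -> R) n mu : (forall i, (i < n)%N -> x i < x i.+1) ->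
  x 0%N < mu <= x n -> exists i, (i < n)%N /\ x i < mu <= x i.+1.
Proof.
elim: n => [|n IH] xinc /andP [m1 m2]; first by move: m2; rewrite leNgt m1.
have [mn|mn] := leP mu (x n).
  have [i [i1 i2]] := IH (fun i lt => xinc i (ltnW lt)) (introT andP (conj m1 mn)).
  by exists i; split => //; exact: ltnW.
by exists n; split => //; rewrite mn.
Qed.

Lemma bound_pieces f : inK p f -> exists M, 0 <= M /\
  (forall mu, 1 <= mu < P -> exists h, rpiece f mu h /\ padic_abs p h <= M) /\
  (forall mu, 1 < mu <= P -> exists h, lpiece f mu h /\ padic_abs p h <= M).
Proof.
move=> fK.
have [n [x [x0 [xn [xinc xp]]]]] := inK_PA fK ltr01 (ltW Pgt1).
have [M [M0 HM]] := @fin_bound (fun i h => exists c, forall t,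
   x i <= t <= x i.+1 -> f t = h * t + c) (padic_abs p) n
   (fun i lt => let: ex_intro h (ex_intro c (conj _ E)) := xp i lt in
                ex_intro _ h (ex_intro _ c E)).
exists M; split => //; split.
  move=> mu hm; have hm' : x 0%N <= mu < x n by rewrite x0 xn.
  have [i [lt /andP [i1 i2]]] := find_r xinc hm'.
  have [h [[c fE] hM]] := HM i lt.
  exists h; split => //; exists (x i.+1 - mu), c; split; first by rewrite subr_gt0.
  by move=> t /andP [t1 t2]; apply: fE; apply/andP; split; lra.
move=> mu hm; have hm' : x 0%N < mu <= x n by rewrite x0 xn.
have [i [lt /andP [i1 i2]]] := find_l xinc hm'.
have [h [[c fE] hM]] := HM i lt.
exists h; split => //; exists (mu - x i), c; split; first by rewrite subr_gt0.
by move=> t /andP [t1 t2]; apply: fE; apply/andP; split; lra.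
Qed.

Lemma slope_R f lam : inK p f -> 0 < lam -> exists (k : int) (mu h0 : R),
  1 <= mu < P /\ lam = P ^ k * mu /\ inHp p h0 /\ rpiece f mu h0 /\
  rslope f lam = P ^ (- k) * h0.
Proof.
move=> fK l0; have [k [mu [/andP [m1 m2] lE]]] := decompR l0.
have m0 : 0 < mu by lra.
have [h0 [hh rp]] := inK_rpiece fK m0.
exists k, mu, h0; split; first by rewrite m1 m2.
do 3!split => //.
rewrite lE -invr_expz; apply: rpiece_rslope; apply: rpiece_scale => //.
  by rewrite exprz_gt0 // Pgt0.
by move=> s s0; exact: inK_perz.
Qed.

Lemma slope_L f lam : inK p f -> 0 < lam -> exists (k : int) (mu h0 : R),
  1 < mu <= P /\ lam = P ^ k * mu /\ inHp p h0 /\ lpiece f mu h0 /\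
  lslope f lam = P ^ (- k) * h0.
Proof.
move=> fK l0; have [k [mu [/andP [m1 m2] lE]]] := decompL l0.
have m0 : 0 < mu by lra.
have [h0 [hh rp]] := inK_lpiece fK m0.
exists k, mu, h0; split; first by rewrite m1 m2.
do 3!split => //.
rewrite lE -invr_expz; apply: lpiece_lslope; apply: lpiece_scale => //.
  by rewrite exprz_gt0 // Pgt0.
by move=> s s0; exact: inK_perz.
Qed.

Lemma ratio_scale (k : int) (mu h0 : R) : inHp p h0 ->
  padic_abs p (P ^ (- k) * h0) / (P ^ k * mu) = padic_abs p h0 / mu.
Proof.
move=> hh; rewrite padic_absMP // opprK.
have [->|m0] := eqVneq mu 0; first by rewrite mulr0 !invr0 !mulr0.
by field; rewrite m0 expfz_neq0 // Pneq0.
Qed.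

Definition normset (f : R -> R) := [set r : R | exists lam h : R, 0 < lam /\
        (h = rslope f lam \/ h = lslope f lam) /\ r = padic_abs p h / lam].

Lemma normpE f : normp p f = sup (normset f). Proof. by []. Qed.

Lemma normset_ub f : inK p f -> exists M, forall r, normset f r -> r <= M.
Proof.
move=> fK; have [M [M0 [HR HL]]] := bound_pieces fK.
exists M => r [lam [h [l0 [[->|->] ->]]]].
  have [k [mu [h0 [hm [lE [hh [rp ->]]]]]]] := slope_R fK l0.
  rewrite lE ratio_scale //.
  have [h1 [rp1 hM]] := HR mu hm.
  have e : h1 = h0 by rewrite -(rpiece_rslope rp1) (rpiece_rslope rp).
  move: hm => /andP [m1 _]; rewrite -e.
  apply: le_trans hM; rewrite ler_pdivrMr; last by lra.
  by apply: ler_peMr => //; rewrite e; exact: padic_abs_ge0.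
have [k [mu [h0 [hm [lE [hh [rp ->]]]]]]] := slope_L fK l0.
rewrite lE ratio_scale //.
have [h1 [rp1 hM]] := HL mu hm.
have e : h1 = h0 by rewrite -(lpiece_lslope rp1) (lpiece_lslope rp).
move: hm => /andP [m1 _]; rewrite -e.
apply: le_trans hM; rewrite ler_pdivrMr; last by lra.
by apply: ler_peMr; [rewrite e; exact: padic_abs_ge0|lra].
Qed.

Lemma normset_has_sup f : inK p f -> has_sup (normset f).
Proof.
move=> fK; split.
  exists (padic_abs p (rslope f 1) / 1), 1, (rslope f 1).
  by split; [exact: ltr01|split; [left|]].
by have [M HM] := normset_ub fK; exists M.
Qed.
End P2.

Section P3.
Variable R : realType.
Variable p : nat.
Hypothesis hp : prime p.
Local Notation P := (p%:R : R).

Lemma rpiece_eq (f F : R -> R) lam h d : rpiece f lam h -> 0 < d ->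
  (forall t, lam <= t <= lam + d -> F t = f t) -> rpiece F lam h.
Proof.
move=> [d1 [c [d10 fE]]] d0 FE; exists (Num.min d d1), c; split.
  by rewrite lt_min d0.
move=> t /andP [t1 t2]; have m1 : Num.min d d1 <= d by rewrite ge_min lexx.
have m2 : Num.min d d1 <= d1 by rewrite ge_min lexx orbT.
rewrite FE ?fE //; apply/andP; split; lra.
Qed.

Lemma lpiece_eq (f F : R -> R) lam h d : lpiece f lam h -> 0 < d ->
  (forall t, lam - d <= t <= lam -> F t = f t) -> lpiece F lam h.
Proof.
move=> [d1 [c [d10 fE]]] d0 FE; exists (Num.min d d1), c; split.
  by rewrite lt_min d0.
move=> t /andP [t1 t2]; have m1 : Num.min d d1 <= d by rewrite ge_min lexx.
have m2 : Num.min d d1 <= d1 by rewrite ge_min lexx orbT.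
rewrite FE ?fE //; apply/andP; split; lra.
Qed.

Lemma dom_r (f g : R -> R) lam h1 h2 : rpiece f lam h1 -> rpiece g lam h2 ->
  g lam < f lam -> exists d, 0 < d /\ forall t, lam <= t <= lam + d -> g t <= f t.
Proof.
move=> [d1 [c1 [d10 fE]]] [d2 [c2 [d20 gE]]] lt.
set D := f lam - g lam; set s := h1 - h2; set A := `|s| + 1.
have A0 : 0 < A by rewrite /A; have := normr_ge0 s; lra.
have D0 : 0 < D by rewrite /D; lra.
exists (Num.min (Num.min d1 d2) (D / A)); split.
  by rewrite !lt_min d10 d20 divr_gt0.
move=> t /andP [t1 t2].
have m1 : Num.min (Num.min d1 d2) (D / A) <= d1 by rewrite !ge_min lexx.
have m2 : Num.min (Num.min d1 d2) (D / A) <= d2 by rewrite !ge_min lexx orbT.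
have m3 : Num.min (Num.min d1 d2) (D / A) <= D / A by rewrite !ge_min lexx !orbT.
have uA : (t - lam) * A <= D by rewrite -ler_pdivlMr //; lra.
have fl : f lam = h1 * lam + c1 by apply: fE; apply/andP; split; lra.
have gl : g lam = h2 * lam + c2 by apply: gE; apply/andP; split; lra.
have ns : - s <= `|s| by rewrite -normrN ler_norm.
have ns' : s <= `|s| by rewrite ler_norm.
rewrite fE ?gE; try (apply/andP; split; lra).
have : D = (h1 - h2) * lam + (c1 - c2) by rewrite /D fl gl; ring.
rewrite /A /s in uA ns ns' *; nra.
Qed.

Lemma dom_l (f g : R -> R) lam h1 h2 : lpiece f lam h1 -> lpiece g lam h2 ->
  g lam < f lam -> exists d, 0 < d /\ forall t, lam - d <= t <= lam -> g t <= f t.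
Proof.
move=> [d1 [c1 [d10 fE]]] [d2 [c2 [d20 gE]]] lt.
set D := f lam - g lam; set s := h1 - h2; set A := `|s| + 1.
have A0 : 0 < A by rewrite /A; have := normr_ge0 s; lra.
have D0 : 0 < D by rewrite /D; lra.
exists (Num.min (Num.min d1 d2) (D / A)); split.
  by rewrite !lt_min d10 d20 divr_gt0.
move=> t /andP [t1 t2].
have m1 : Num.min (Num.min d1 d2) (D / A) <= d1 by rewrite !ge_min lexx.
have m2 : Num.min (Num.min d1 d2) (D / A) <= d2 by rewrite !ge_min lexx orbT.
have m3 : Num.min (Num.min d1 d2) (D / A) <= D / A by rewrite !ge_min lexx !orbT.
have uA : (lam - t) * A <= D by rewrite -ler_pdivlMr //; lra.
have fl : f lam = h1 * lam + c1 by apply: fE; apply/andP; split; lra.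
have gl : g lam = h2 * lam + c2 by apply: gE; apply/andP; split; lra.
have ns : - s <= `|s| by rewrite -normrN ler_norm.
have ns' : s <= `|s| by rewrite ler_norm.
rewrite fE ?gE; try (apply/andP; split; lra).
have : D = (h1 - h2) * lam + (c1 - c2) by rewrite /D fl gl; ring.
rewrite /A /s in uA ns ns' *; nra.
Qed.

Lemma max_affine_pos (a b c u : R) : 0 <= u ->
  Num.max (a * u + c) (b * u + c) = Num.max a b * u + c.
Proof.
by move=> u0; rewrite maxr_pMl // addr_maxl.
Qed.

Lemma max_affine_neg (a b c u : R) : u <= 0 ->
  Num.max (a * u + c) (b * u + c) = Num.min a b * u + c.
Proof.
by move=> u0; rewrite minr_nMl // addr_maxl.
Qed.

Lemma max_local (f g : R -> R) lam h1 k1 h2 k2 :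
  rpiece f lam h1 -> lpiece f lam k1 -> rpiece g lam h2 -> lpiece g lam k2 ->
  let M := fun t => Num.max (f t) (g t) in
  (rpiece M lam h1 /\ lpiece M lam k1) \/ (rpiece M lam h2 /\ lpiece M lam k2) \/
  (rpiece M lam (Num.max h1 h2) /\ lpiece M lam (Num.min k1 k2)).
Proof.
move=> rf lf rg lg M.
have [lt|lt|eq] := ltgtP (g lam) (f lam).
- left; have [d [d0 H]] := dom_r rf rg lt; have [d' [d0' H']] := dom_l lf lg lt.
  split.
    by apply: (rpiece_eq rf d0) => t tt; rewrite /M max_l //; exact: H.
  by apply: (lpiece_eq lf d0') => t tt; rewrite /M max_l //; exact: H'.
- right; left.
  have [d [d0 H]] := dom_r rg rf lt; have [d' [d0' H']] := dom_l lg lf lt.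
  split.
    by apply: (rpiece_eq rg d0) => t tt; rewrite /M max_r //; exact: H.
  by apply: (lpiece_eq lg d0') => t tt; rewrite /M max_r //; exact: H'.
- right; right; split.
  + move: rf rg => [d1 [c1 [d10 fE]]] [d2 [c2 [d20 gE]]].
    exists (Num.min d1 d2), (f lam - Num.max h1 h2 * lam); split.
      by rewrite lt_min d10.
    move=> t /andP [t1 t2].
    have m1 : Num.min d1 d2 <= d1 by rewrite ge_min lexx.
    have m2 : Num.min d1 d2 <= d2 by rewrite ge_min lexx orbT.
    have fl : f lam = h1 * lam + c1 by apply: fE; apply/andP; split; lra.
    have gl : g lam = h2 * lam + c2 by apply: gE; apply/andP; split; lra.
    have ft : f t = h1 * (t - lam) + f lam.
      by rewrite fE ?fl; [ring|apply/andP; split; lra].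
    have gt : g t = h2 * (t - lam) + f lam.
      by rewrite -eq gl gE; [ring|apply/andP; split; lra].
    rewrite /M ft gt max_affine_pos; [ring|lra].
  + move: lf lg => [d1 [c1 [d10 fE]]] [d2 [c2 [d20 gE]]].
    exists (Num.min d1 d2), (f lam - Num.min k1 k2 * lam); split.
      by rewrite lt_min d10.
    move=> t /andP [t1 t2].
    have m1 : Num.min d1 d2 <= d1 by rewrite ge_min lexx.
    have m2 : Num.min d1 d2 <= d2 by rewrite ge_min lexx orbT.
    have fl : f lam = k1 * lam + c1 by apply: fE; apply/andP; split; lra.
    have gl : g lam = k2 * lam + c2 by apply: gE; apply/andP; split; lra.
    have ft : f t = k1 * (t - lam) + f lam.
      by rewrite fE ?fl; [ring|apply/andP; split; lra].
    have gt : g t = k2 * (t - lam) + f lam.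
      by rewrite -eq gl gE; [ring|apply/andP; split; lra].
    rewrite /M ft gt max_affine_neg; [ring|lra].
Qed.

Lemma maxr_cases (a b : R) : Num.max a b = a \/ Num.max a b = b.
Proof. by rewrite /Order.max; case: ifP => _; [right|left]. Qed.
Lemma minr_cases (a b : R) : Num.min a b = a \/ Num.min a b = b.
Proof. by rewrite /Order.min; case: ifP => _; [left|right]. Qed.

Lemma slopes_max (f g : R -> R) lam : inK p f -> inK p g -> 0 < lam ->
  let M := fun t => Num.max (f t) (g t) in
  (rslope M lam = rslope f lam \/ rslope M lam = rslope g lam) /\
  (lslope M lam = lslope f lam \/ lslope M lam = lslope g lam).
Proof.
move=> fK gK l0 M.
have [h1 [_ rf]] := inK_rpiece fK l0; have [k1 [_ lf]] := inK_lpiece fK l0.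
have [h2 [_ rg]] := inK_rpiece gK l0; have [k2 [_ lg]] := inK_lpiece gK l0.
rewrite (rpiece_rslope rf) (rpiece_rslope rg) (lpiece_lslope lf) (lpiece_lslope lg).
have [[rM lM]|[[rM lM]|[rM lM]]] := max_local rf lf rg lg.
- by rewrite (rpiece_rslope rM) (lpiece_lslope lM); split; left.
- by rewrite (rpiece_rslope rM) (lpiece_lslope lM); split; right.
- by rewrite (rpiece_rslope rM) (lpiece_lslope lM); split;
    [exact: maxr_cases|exact: minr_cases].
Qed.

Lemma normset_ne (f : R -> R) : normset p f !=set0.
Proof.
exists (padic_abs p (rslope f 1) / 1), 1, (rslope f 1).
by split; [exact: ltr01|split; [left|]].
Qed.

Lemma le_normp (f : R -> R) r : inK p f -> normset p f r -> r <= normp p f.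
Proof.
move=> fK H; rewrite normpE; have [_ ub] := normset_has_sup hp fK.
exact: ub_le_sup.
Qed.

Lemma normsetR (f : R -> R) lam : 0 < lam -> normset p f (padic_abs p (rslope f lam) / lam).
Proof. by move=> l0; exists lam, (rslope f lam); split => //; split => //; left. Qed.
Lemma normsetL (f : R -> R) lam : 0 < lam -> normset p f (padic_abs p (lslope f lam) / lam).
Proof. by move=> l0; exists lam, (lslope f lam); split => //; split => //; right. Qed.

Lemma normp_max (f g : R -> R) : inK p f -> inK p g ->
  normp p (fun t => Num.max (f t) (g t)) <= Num.max (normp p f) (normp p g).
Proof.
move=> fK gK; rewrite [X in X <= _]normpE; apply: ge_sup; first exact: normset_ne.
move=> r [lam [h [l0 [hE ->]]]].
have [R1 L1] := slopes_max fK gK l0.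
have key : normset p f (padic_abs p h / lam) \/ normset p g (padic_abs p h / lam).
  case: hE => ->.
    by case: R1 => ->; [left|right]; exact: normsetR.
  by case: L1 => ->; [left|right]; exact: normsetL.
case: key => H.
  by rewrite le_max (le_normp fK H).
by rewrite le_max (le_normp gK H) orbT.
Qed.

Lemma normp_add (f g : R -> R) : inK p f -> inK p g ->
  normp p (fun t => f t + g t) <= Num.max (normp p f) (normp p g).
Proof.
move=> fK gK; rewrite [X in X <= _]normpE; apply: ge_sup; first exact: normset_ne.
move=> r [lam [h [l0 [hE ->]]]].
have [h1 [H1 rf]] := inK_rpiece fK l0; have [k1 [K1 lf]] := inK_lpiece fK l0.
have [h2 [H2 rg]] := inK_rpiece gK l0; have [k2 [K2 lg]] := inK_lpiece gK l0.
have gen : forall a b, inHp p a -> inHp p b ->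
    normset p f (padic_abs p a / lam) -> normset p g (padic_abs p b / lam) ->
    padic_abs p (a + b) / lam <= Num.max (normp p f) (normp p g).
  move=> a b Ha Hb Na Nb.
  have := padic_ultra hp Ha Hb; rewrite le_max => /orP [le|le].
    rewrite le_max; apply/orP; left; apply: le_trans (le_normp fK Na).
    by rewrite ler_pM2r // invr_gt0.
  rewrite le_max; apply/orP; right; apply: le_trans (le_normp gK Nb).
  by rewrite ler_pM2r // invr_gt0.
case: hE => ->.
  have rs : rpiece (fun t => f t + g t) lam (h1 + h2).
    move: rf rg => [d1 [c1 [d10 fE]]] [d2 [c2 [d20 gE]]].
    exists (Num.min d1 d2), (c1 + c2); split; first by rewrite lt_min d10.
    move=> t /andP [t1 t2].
    have m1 : Num.min d1 d2 <= d1 by rewrite ge_min lexx.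
    have m2 : Num.min d1 d2 <= d2 by rewrite ge_min lexx orbT.
    rewrite fE ?gE; try (apply/andP; split; lra); ring.
  rewrite (rpiece_rslope rs); apply: gen => //.
    by rewrite -(rpiece_rslope rf); exact: normsetR.
  by rewrite -(rpiece_rslope rg); exact: normsetR.
have ls : lpiece (fun t => f t + g t) lam (k1 + k2).
  move: lf lg => [d1 [c1 [d10 fE]]] [d2 [c2 [d20 gE]]].
  exists (Num.min d1 d2), (c1 + c2); split; first by rewrite lt_min d10.
  move=> t /andP [t1 t2].
  have m1 : Num.min d1 d2 <= d1 by rewrite ge_min lexx.
  have m2 : Num.min d1 d2 <= d2 by rewrite ge_min lexx orbT.
  rewrite fE ?gE; try (apply/andP; split; lra); ring.
rewrite (lpiece_lslope ls); apply: gen => //.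
  by rewrite -(lpiece_lslope lf); exact: normsetL.
by rewrite -(lpiece_lslope lg); exact: normsetL.
Qed.

Lemma scale_slopes (f : R -> R) (a : int) lam : inK p f -> 0 < lam ->
  let F := fun t => P ^ a * f t in
  rslope F lam = P ^ a * rslope f lam /\ inHp p (rslope f lam) /\
  lslope F lam = P ^ a * lslope f lam /\ inHp p (lslope f lam).
Proof.
move=> fK l0 F.
have [h1 [H1 rf]] := inK_rpiece fK l0; have [k1 [K1 lf]] := inK_lpiece fK l0.
rewrite (rpiece_rslope rf) (lpiece_lslope lf); split; last split=> //; last split=> //.
  apply: rpiece_rslope; move: rf => [d [c [d0 fE]]]; exists d, (P ^ a * c).
  by split => // t tt; rewrite /F fE //; ring.
apply: lpiece_lslope; move: lf => [d [c [d0 fE]]]; exists d, (P ^ a * c).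
by split => // t tt; rewrite /F fE //; ring.
Qed.

Lemma normset_scale (f : R -> R) (a : int) r : inK p f ->
  normset p (fun t => P ^ a * f t) r <-> exists r0, normset p f r0 /\ r = P ^ (- a) * r0.
Proof.
move=> fK; split.
  move=> [lam [h [l0 [hE ->]]]].
  have [rE [rH [lE lH]]] := scale_slopes a fK l0.
  case: hE => ->.
    exists (padic_abs p (rslope f lam) / lam); split; first exact: normsetR.
    by rewrite rE padic_absMP // mulrA.
  exists (padic_abs p (lslope f lam) / lam); split; first exact: normsetL.
  by rewrite lE padic_absMP // mulrA.
move=> [r0 [[lam [h [l0 [hE ->]]]] ->]].
have [rE [rH [lE lH]]] := scale_slopes a fK l0.
case: hE => ->.
  by rewrite mulrA -padic_absMP // -rE; exact: normsetR.
by rewrite mulrA -padic_absMP // -lE; exact: normsetL.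
Qed.

Lemma normp_scale (f : R -> R) (a : int) : inK p f ->
  normp p (fun t => P ^ a * f t) = P ^ (- a) * normp p f.
Proof.
move=> fK.
have Pa0 : 0 < P ^ (- a) by rewrite exprz_gt0 // (P_gt0 R hp).
have ub : forall r, normset p (fun t => P ^ a * f t) r -> r <= P ^ (- a) * normp p f.
  move=> r /(normset_scale _ _ fK) [r0 [H0 ->]].
  by rewrite ler_pM2l // le_normp.
apply/eqP; rewrite eq_le; apply/andP; split.
  by rewrite normpE; apply: ge_sup; [exact: normset_ne|exact: ub].
have hs : has_sup (normset p (fun t => P ^ a * f t)).
  by split; [exact: normset_ne|exists (P ^ (- a) * normp p f)].
have Pa1 : P ^ (- a) * P ^ a = 1 by rewrite -expfzDr ?(P_neq0 R hp) // addNr expr0z.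
have Pa2 : P ^ a * P ^ (- a) = 1 by rewrite mulrC.
have Pa3 : 0 < P ^ a by rewrite exprz_gt0 // (P_gt0 R hp).
have key : normp p f <= P ^ a * normp p (fun t => P ^ a * f t).
  rewrite [X in X <= _]normpE; apply: ge_sup; first exact: normset_ne.
  move=> r0 H0.
  have H1 : normset p (fun t => P ^ a * f t) (P ^ (- a) * r0).
    by apply/(normset_scale _ _ fK); exists r0.
  have := ub_le_sup hs.2 H1; rewrite -normpE => le.
  have -> : r0 = P ^ a * (P ^ (- a) * r0) by rewrite mulrA Pa2 mul1r.
  by rewrite ler_pM2l.
apply: le_trans (_ : P ^ (- a) * (P ^ a * normp p (fun t => P ^ a * f t)) <= _).
  by rewrite ler_pM2l.
by rewrite mulrA Pa1 mul1r.
Qed.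

Lemma normp_le1 (f : R -> R) : inK p f ->
  (normp p f <= 1 <->
   (forall lam : R, 1 <= lam < P -> exists z : int, rslope f lam = z%:~R) /\
   (forall lam : R, 1 < lam <= P -> exists z : int, lslope f lam = z%:~R)).
Proof.
move=> fK; split.
  move=> le1; split.
    move=> lam /andP [l1 l2]; have l0 : 0 < lam by lra.
    have [h [hh rf]] := inK_rpiece fK l0; rewrite (rpiece_rslope rf).
    apply: (padic_abs_ltP hp) => //; apply: le_lt_trans l2.
    have := le_trans (le_normp fK (normsetR f l0)) le1.
    by rewrite (rpiece_rslope rf) ler_pdivrMr // mul1r.
  move=> lam /andP [l1 l2]; have l0 : 0 < lam by lra.
  have [h [hh rf]] := inK_lpiece fK l0; rewrite (lpiece_lslope rf).
  move: (rf) => [d [c [d0 fE]]].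
  set e := Num.min d (lam - 1) / 2.
  have e0 : 0 < e by rewrite /e divr_gt0 // lt_min d0 subr_gt0.
  have ed : e <= d / 2 by rewrite /e ler_pM2r ?ge_min ?lexx //; lra.
  have el : e <= (lam - 1) / 2 by rewrite /e ler_pM2r ?ge_min ?lexx ?orbT //; lra.
  have l'0 : 0 < lam - e by lra.
  have rf' : rpiece f (lam - e) h.
    exists e, c; split => // t /andP [t1 t2]; apply: fE; apply/andP; split; lra.
  have := le_trans (le_normp fK (normsetR f l'0)) le1.
  rewrite (rpiece_rslope rf') ler_pdivrMr // mul1r => le.
  by apply: (padic_abs_ltP hp) => //; apply: le_lt_trans le _; lra.
move=> [HR HL]; rewrite normpE; apply: ge_sup; first exact: normset_ne.
move=> r [lam [h [l0 [[->|->] ->]]]].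
  have [k [mu [h0 [hm [lE [hh0 [rp ->]]]]]]] := slope_R hp fK l0.
  rewrite lE ratio_scale //.
  have [z zE] := HR mu hm; move: zE; rewrite (rpiece_rslope rp) => ->.
  move: hm => /andP [m1 _]; rewrite ler_pdivrMr; last by lra.
  by rewrite mul1r; apply: le_trans (@padic_abs_int R p hp z) m1.
have [k [mu [h0 [hm [lE [hh0 [rp ->]]]]]]] := slope_L hp fK l0.
rewrite lE ratio_scale //.
have [z zE] := HL mu hm; move: zE; rewrite (lpiece_lslope rp) => ->.
move: hm => /andP [m1 _]; rewrite ler_pdivrMr; last by lra.
by rewrite mul1r; apply: le_trans (@padic_abs_int R p hp z) _; lra.
Qed.
End P3.

Section P4.
Variable R : realType.
Variable p : nat.
Hypothesis hp : prime p.
Local Notation P := (p%:R : R).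
Local Notation PA := (@PA R p).

Lemma PA_refl (F : R -> R) a : PA F a a.
Proof. by exists 0%N, (fun=> a); do 3!split => // i; rewrite ltn0. Qed.

Lemma PA_one (F : R -> R) a b : a < b ->
  (exists h c, inHp p h /\ forall t, a <= t <= b -> F t = h * t + c) -> PA F a b.
Proof.
move=> ab [h [c [hh fE]]]; exists 1%N, (fun i => if i == 0%N then a else b).
do 3!split => //; case=> // _; exists h, c; split => //.
Qed.

Lemma incr_le (x : nat -> R) n : (forall i, (i < n)%N -> x i < x i.+1) ->
  forall i j, (i <= j)%N -> (j <= n)%N -> x i <= x j.
Proof.
move=> xinc i; elim=> [|j IH] ij jn; first by move: ij; rewrite leqn0 => /eqP ->.
move: ij; rewrite leq_eqVlt => /orP [/eqP ->//|ij].
apply: le_trans (IH ij (ltnW jn)) _; exact/ltW/xinc.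
Qed.

Lemma PA_cat (F : R -> R) a m b : PA F a m -> PA F m b -> PA F a b.
Proof.
move=> [n1 [x1 [x10 [x1n [x1inc x1p]]]]] [n2 [x2 [x20 [x2n [x2inc x2p]]]]].
pose x i := if (i <= n1)%N then x1 i else x2 (i - n1)%N.
have xl : forall i, (i <= n1)%N -> x i = x1 i by move=> i le; rewrite /x le.
have xr : forall i, (n1 <= i)%N -> x i = x2 (i - n1)%N.
  move=> i le; rewrite /x; case: ifP => // le'.
  have -> : i = n1 by apply/eqP; rewrite eqn_leq le le'.
  by rewrite subnn x1n x20.
exists (n1 + n2)%N, x; split; first by rewrite xl.
split; first by rewrite xr ?leq_addr // addKn.
split.
  move=> i lt; have [le|le] := leqP n1 i.
    rewrite !xr ?(leq_trans le) // subSn //; apply: x2inc.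
    by rewrite ltn_subLR.
  by rewrite !xl ?(ltnW le) //; apply: x1inc.
move=> i lt; have [le|le] := leqP n1 i.
  rewrite !xr ?(leq_trans le) // subSn //; apply: x2p.
  by rewrite ltn_subLR.
by rewrite !xl ?(ltnW le) //; apply: x1p.
Qed.

Lemma PA_ext (F G : R -> R) a b : (forall t, a <= t <= b -> G t = F t) ->
  PA F a b -> PA G a b.
Proof.
move=> FG [n [x [x0 [xn [xinc xp]]]]]; exists n, x; do 3!split => //.
move=> i lt; have [h [c [hh fE]]] := xp i lt; exists h, c; split => //.
move=> t /andP [t1 t2]; rewrite FG ?fE ?t1 ?t2 //.
have a1 : a <= x i by rewrite -x0; apply: (incr_le xinc) => //; exact: ltnW.
have b1 : x i.+1 <= b by rewrite -xn; apply: (incr_le xinc).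
by apply/andP; split; [exact: le_trans t1|exact: le_trans b1].
Qed.

Lemma affA (F : R -> R) a b h1 c1 h2 c2 : a <= b -> inHp p h1 ->
  (forall t, a <= t <= b -> F t = Num.max (h1 * t + c1) (h2 * t + c2)) ->
  0 <= (h1 * a + c1) - (h2 * a + c2) -> 0 <= (h1 * b + c1) - (h2 * b + c2) ->
  PA F a b.
Proof.
move=> ab hh FE Da Db; move: ab; rewrite le_eqVlt => /orP [/eqP <-|ab].
  exact: PA_refl.
apply: PA_one => //; exists h1, c1; split => // t /andP [t1 t2].
rewrite FE ?t1 ?t2 // max_l //.
have : (b - a) * ((h1 * t + c1) - (h2 * t + c2)) =
   (b - t) * ((h1 * a + c1) - (h2 * a + c2)) + (t - a) * ((h1 * b + c1) - (h2 * b + c2)).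
  by ring.
move=> E; rewrite -subr_ge0; have ba : 0 < b - a by lra.
have : 0 <= (b - a) * ((h1 * t + c1) - (h2 * t + c2)).
  by rewrite E addr_ge0 // mulr_ge0 //; lra.
by rewrite pmulr_rge0.
Qed.

Lemma affB (F : R -> R) a b h1 c1 h2 c2 : a <= b -> inHp p h2 ->
  (forall t, a <= t <= b -> F t = Num.max (h1 * t + c1) (h2 * t + c2)) ->
  (h1 * a + c1) - (h2 * a + c2) <= 0 -> (h1 * b + c1) - (h2 * b + c2) <= 0 ->
  PA F a b.
Proof.
move=> ab hh FE Da Db.
apply: (@affA F a b h2 c2 h1 c1) => //; last 2 first.
- by rewrite -opprB oppr_ge0.
- by rewrite -opprB oppr_ge0.
by move=> t tt; rewrite FE // maxC.
Qed.

Lemma theta_bounds (x y : R) : (0 <= x /\ y < 0) \/ (x < 0 /\ 0 <= y) ->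
  0 <= x / (x - y) <= 1.
Proof.
case=> [[x0 y0]|[x0 y0]].
  have d0 : 0 < x - y by lra.
  by apply/andP; split; [apply: divr_ge0; lra|rewrite ler_pdivrMr // mul1r; lra].
have -> : x / (x - y) = (- x) / (y - x) by field; apply/andP; split; apply/eqP; lra.
have d0 : 0 < y - x by lra.
by apply/andP; split; [apply: divr_ge0; lra|rewrite ler_pdivrMr // mul1r; lra].
Qed.

Lemma two_affine (F : R -> R) a b h1 c1 h2 c2 : a <= b -> inHp p h1 -> inHp p h2 ->
  (forall t, a <= t <= b -> F t = Num.max (h1 * t + c1) (h2 * t + c2)) ->
  PA F a b.
Proof.
move=> ab H1 H2 FE.
pose D t := (h1 * t + c1) - (h2 * t + c2).
have DE : forall t, D t = D a + (h1 - h2) * (t - a) by move=> t; rewrite /D; ring.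
have sE : (h1 - h2) * (b - a) = D b - D a by rewrite (DE b); ring.
have cross : (0 <= D a /\ D b < 0) \/ (D a < 0 /\ 0 <= D b) ->
    exists ts, a <= ts <= b /\ D ts = 0.
  move=> hc; have := theta_bounds hc; set th := D a / (D a - D b) => /andP [th0 th1].
  have Dn : D a - D b != 0 by apply/eqP; case: hc => [[]|[]]; lra.
  exists (a + th * (b - a)); split; first by apply/andP; split; nra.
  rewrite DE.
  have -> : (h1 - h2) * (a + th * (b - a) - a) = th * ((h1 - h2) * (b - a)) by ring.
  by rewrite sE /th; field.
have FEs : forall u v, a <= u -> v <= b -> forall t, u <= t <= v ->
    F t = Num.max (h1 * t + c1) (h2 * t + c2).
  by move=> u v au vb t /andP [t1 t2]; apply: FE; apply/andP; split; lra.
have [Da|Da] := leP 0 (D a); have [Db|Db] := leP 0 (D b).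
- exact: (affA ab H1 FE).
- have [ts [/andP [t1 t2] Dts]] := cross (or_introl (conj Da Db)).
  apply: (@PA_cat _ _ ts).
    apply: (affA t1 H1 (FEs _ _ (lexx a) t2)) => //.
    by move: Dts; rewrite /D => ->.
  apply: (affB t2 H2 (FEs _ _ t1 (lexx b))) => //; last by rewrite /D in Db; lra.
  by move: Dts; rewrite /D => ->.
- have [ts [/andP [t1 t2] Dts]] := cross (or_intror (conj Da Db)).
  apply: (@PA_cat _ _ ts).
    apply: (affB t1 H2 (FEs _ _ (lexx a) t2)) => //; first by rewrite /D in Da; lra.
    by move: Dts; rewrite /D => ->.
  apply: (affA t2 H1 (FEs _ _ t1 (lexx b))) => //.
  by move: Dts; rewrite /D => ->.
- exact: (affB ab H2 FE (ltW Da) (ltW Db)).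
Qed.

Lemma inK_max (f g : R -> R) : inK p f -> inK p g ->
  inK p (fun t => Num.max (f t) (g t)).
Proof.
move=> fK gK; move: (fK) (gK) => [fc [_ fper]] [gc [_ gper]].
split; first by move=> x x0; have := continuous_max (fc x x0) (gc x x0).
split; last by move=> lam l0; rewrite fper ?gper.
move=> a b a0 ab.
have [n [x [x0 [xn [xinc xp]]]]] := inK_PA fK a0 ab.
suff H : forall i, (i <= n)%N -> PA (fun t => Num.max (f t) (g t)) a (x i).
  by rewrite -xn; exact: H.
elim=> [|i IH] le; first by rewrite x0; exact: PA_refl.
apply: (PA_cat (IH (ltnW le))).
have [h [c [hh fE]]] := xp i le.
have xi0 : 0 < x i.
  by apply: lt_le_trans a0 _; rewrite -x0; apply: (incr_le xinc) => //; exact: ltnW.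
have [m [y [y0 [ym [yinc yp]]]]] := inK_PA gK xi0 (ltW (xinc i le)).
suff H : forall j, (j <= m)%N -> PA (fun t => Num.max (f t) (g t)) (x i) (y j).
  by rewrite -ym; exact: H.
elim=> [|j IHj] lj; first by rewrite y0; exact: PA_refl.
apply: (PA_cat (IHj (ltnW lj))).
have [h' [c' [hh' gE]]] := yp j lj.
apply: (two_affine (ltW (yinc j lj)) hh hh') => t /andP [t1 t2].
have yj : x i <= y j by rewrite -y0; apply: (incr_le yinc) => //; exact: ltnW.
have yj1 : y j.+1 <= x i.+1 by rewrite -ym; apply: (incr_le yinc).
rewrite fE ?gE ?t1 ?t2 //; apply/andP; split; [exact: le_trans t1|exact: le_trans yj1].
Qed.

Lemma inK_shift (r : R) (f : R -> R) : inK p f -> inK p (fun t => r + f t).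
Proof.
move=> fK; move: (fK) => [fc [_ fper]].
split.
  move=> x x0; apply: (@continuousD _ _ _ (fun=> r) f); last exact: fc.
  exact: cst_continuous.
split; last by move=> lam l0; rewrite fper.
move=> a b a0 ab; have [n [x [x0 [xn [xinc xp]]]]] := inK_PA fK a0 ab.
exists n, x; do 3!split => //.
move=> i lt; have [h [c [hh fE]]] := xp i lt; exists h, (r + c); split => //.
by move=> t tt; rewrite fE //; ring.
Qed.

Lemma rslope_shift (r : R) (f : R -> R) : rslope (fun t => r + f t) = rslope f.
Proof.
apply: funext => lam; rewrite /rslope.
have E : (fun t => (r + f (lam + t) - (r + f lam)) / t) = (fun t => (f (lam + t) - f lam) / t).
  by apply: funext => t; congr (_ / _); ring.
by rewrite E.
Qed.
Lemma lslope_shift (r : R) (f : R -> R) : lslope (fun t => r + f t) = lslope f.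
Proof.
apply: funext => lam; rewrite /lslope.
have E : (fun t => (r + f (lam + t) - (r + f lam)) / t) = (fun t => (f (lam + t) - f lam) / t).
  by apply: funext => t; congr (_ / _); ring.
by rewrite E.
Qed.
Lemma pdiv_shift (r : R) (f : R -> R) : Defs.pdiv (fun t => r + f t) = Defs.pdiv f.
Proof.
apply: funext => lam; rewrite /Defs.pdiv /hplus /hminus.
have E : (fun t => (r + f ((1 + t) * lam) - (r + f lam)) / t) = (fun t => (f ((1 + t) * lam) - f lam) / t).
  by apply: funext => t; congr (_ / _); ring.
by rewrite E.
Qed.
Lemma normp_shift (r : R) (f : R -> R) : normp p (fun t => r + f t) = normp p f.
Proof. by rewrite /normp rslope_shift lslope_shift. Qed.

Lemma pdiv_max (f g : R -> R) lam : inK p f -> inK p g -> 0 < lam ->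
  Defs.pdiv f lam <= Defs.pdiv (fun t => Num.max (f t) (g t)) lam \/
  Defs.pdiv g lam <= Defs.pdiv (fun t => Num.max (f t) (g t)) lam.
Proof.
move=> fK gK l0.
have [h1 [_ rf]] := inK_rpiece fK l0; have [k1 [_ lf]] := inK_lpiece fK l0.
have [h2 [_ rg]] := inK_rpiece gK l0; have [k2 [_ lg]] := inK_lpiece gK l0.
rewrite /Defs.pdiv (rpiece_hplus l0 rf) (rpiece_hplus l0 rg).
rewrite (lpiece_hminus l0 lf) (lpiece_hminus l0 lg).
have [[rM lM]|[[rM lM]|[rM lM]]] := max_local rf lf rg lg;
  rewrite (rpiece_hplus l0 rM) (lpiece_hminus l0 lM).
- by left.
- by right.
left; have m1 : h1 <= Num.max h1 h2 by rewrite le_max lexx.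
have m2 : Num.min k1 k2 <= k1 by rewrite ge_min lexx.
by rewrite lerB // ler_pM2r.
Qed.
End P4.

Theorem proposition5p15 (R : realType) (p : nat) (hp : prime p) :
  (forall f g : R -> R, inK p f -> inK p g ->
     (* (i) *)
     normp p (fun t => Num.max (f t) (g t)) <= Num.max (normp p f) (normp p g) /\
     (* (ii) *)
     normp p (fun t => f t + g t) <= Num.max (normp p f) (normp p g) /\
     (* (iii) *)
     (forall a : int, normp p (fun t => (p%:R : R) ^ a * f t) = (p%:R : R) ^ (- a) * normp p f) /\
     (* (iv) *)
     (normp p f <= 1 <->
        (forall lam : R, 1 <= lam < p%:R -> exists z : int, rslope f lam = z%:~R) /\
        (forall lam : R, 1 < lam <= p%:R -> exists z : int, lslope f lam = z%:~R))) /\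
  (* (v) *)
  (forall D : set R -> R, isDiv p D ->
     (forall rho : R, 0 < rho -> Rmax_submodule (H0rho p D rho)) /\
     (forall rho rho' : R, 0 < rho -> rho <= rho' -> H0rho p D rho `<=` H0rho p D rho') /\
     (forall rho : R, 0 < rho -> H0rho p D rho `<=` H0 p D) /\
     (forall x, H0 p D x -> exists rho : R, 0 < rho /\ H0rho p D rho x)).
Proof.
split.
  move=> f g fK gK; split; first exact: (normp_max hp).
  split; first exact: (normp_add hp).
  split; first by move=> a; exact: (normp_scale hp).
  exact: (normp_le1 hp).
move=> D HD; split.
  move=> rho rho0; split; first by [].
  split.
    move=> [f|] [g|] //=.
    move=> [[fK fD] fn] [[gK gD] gn]; split; first split.
    - exact: inK_max.
    - move=> lam l0; have := fD lam l0; have := gD lam l0.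
      by case: (pdiv_max fK gK l0) => le; lra.
    - apply: le_trans (normp_max hp fK gK) _; by rewrite ge_max fn gn.
  move=> [r|] [f|] //= [[fK fD] fn]; split; first split.
  - exact: inK_shift.
  - by move=> lam l0; rewrite pdiv_shift; exact: fD.
  - by rewrite normp_shift.
split.
  by move=> rho rho' r0 le [f|] //= [Hf fn]; split => //; exact: le_trans fn le.
split.
  by move=> rho r0 [f|] //= [Hf _].
move=> [f|] /= Hf; last by exists 1; split => //; exact: ltr01.
exists (Num.max 1 (normp p f)); split; first by rewrite lt_max ltr01.
by split => //; rewrite le_max lexx orbT.
Qed.
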